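(* In the coordinates $[z_0,z_1,z_2,z_3,x]$, the four points $\mathbf p_1,\dots,\mathbf p_4$, namely $[-1,0,1,0,0]$, $[0,-1,0,1,0]$, $[0,1,0,1,0]$, $[1,0,1,0,0]$, are singular points of every curve $HC_F(\mathbf v,d)$, $[\mathbf v,d]\in\mathbb{C}P^4$. The four points $[0,0,1,1,\sqrt{-1}]$, $[0,0,1,1,-\sqrt{-1}]$, $[0,0,1,-1,\sqrt{-1}]$, $[0,0,1,-1,-\sqrt{-1}]$ are not singular points of $HC_F(\mathbf v,d)$ if $v_{j1}^2+v_{j2}^2\neq 0$ for $j=1$ or for $j=2$. Consequently, for generic $[\mathbf v,d]$ the only singular points of $HC_F(\mathbf v,d)$ are $\mathbf p_1,\mathbf p_2,\mathbf p_3,\mathbf p_4$; moreover the conditions defining this generic set include that $v_{j1}^2+v_{j2}^2\neq0$ for $j=1$ or for $j=2$.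
   Context: On $\mathbb{C}P^4$ use homogeneous coordinates $[z_0,z_1,z_2,z_3,x]$. For parameters $[\mathbf v,d]=[v_{11},v_{12},v_{21},v_{22},d]\in\mathbb{C}P^4$ (complex, not all zero), $HC_F(\mathbf v,d)$ is the subvariety of $\mathbb{C}P^4$ defined by the three quadrics $z_2^2-z_0^2-(z_3^2-z_1^2)=0$, $x^2+z_2^2-z_0^2=0$, and $(v_{22}z_0-v_{12}z_1)x+v_{21}z_0z_3-v_{11}z_1z_2-dz_0z_1=0$. (These coordinates relate to coordinates $[u,y_1,y_2,r_1,r_2]$ by $z_0=4r_1$, $z_1=4r_2$, $z_2=4(u-y_1)$, $z_3=-4(u+y_1)$, $x=-4y_2$; then the first two quadrics cut out the surface $\{(u-y_1)^2+y_2^2=r_1^2,\ (u+y_1)^2+y_2^2=r_2^2\}$.) A point of $HC_F(\mathbf v,d)$ is singular if the $3\times5$ Jacobian matrix of these three defining polynomials has rank less than $3$ there. ''For generic $[\mathbf v,d]$'' means: for all $[\mathbf v,d]$ in some nonempty Zariski-open subset of the parameter space $\mathbb{C}P^4$ (the complement of the common zero set of finitely many homogeneous polynomials in $v_{11},v_{12},v_{21},v_{22},d$). *)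

(* Defs.v *)
From HB Require Import structures.
From mathcomp Require Import all_boot all_order all_algebra.
From mathcomp Require Import mpoly.
Set Implicit Arguments. Unset Strict Implicit. Unset Printing Implicit Defensive.
Import Order.TTheory GRing.Theory Num.Theory.
Local Open Scope ring_scope.

(* Coordinates on CP^4: [z0, z1, z2, z3, x] are indices 0..4 of 'I_5.
   Parameters [v11, v12, v21, v22, d] are likewise indices 0..4 of 'I_5.
   A point / parameter is represented by a homogeneous coordinate vector
   'I_5 -> C. *)
Definition i0 : 'I_5 := @Ordinal 5 0 isT.
Definition i1 : 'I_5 := @Ordinal 5 1 isT.
Definition i2 : 'I_5 := @Ordinal 5 2 isT.
Definition i3 : 'I_5 := @Ordinal 5 3 isT.
Definition i4 : 'I_5 := @Ordinal 5 4 isT.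

Section HC.
Variable C : numClosedFieldType.

Definition v11 (p : 'I_5 -> C) := p i0.
Definition v12 (p : 'I_5 -> C) := p i1.
Definition v21 (p : 'I_5 -> C) := p i2.
Definition v22 (p : 'I_5 -> C) := p i3.
Definition dpar (p : 'I_5 -> C) := p i4.

Definition nonzero5 (w : 'I_5 -> C) : Prop := exists i, w i != 0.

Definition Z0 : {mpoly C[5]} := 'X_i0.
Definition Z1 : {mpoly C[5]} := 'X_i1.
Definition Z2 : {mpoly C[5]} := 'X_i2.
Definition Z3 : {mpoly C[5]} := 'X_i3.
Definition XX : {mpoly C[5]} := 'X_i4.

Definition HCq1 : {mpoly C[5]} := Z2 ^+ 2 - Z0 ^+ 2 - (Z3 ^+ 2 - Z1 ^+ 2).
Definition HCq2 : {mpoly C[5]} := XX ^+ 2 + Z2 ^+ 2 - Z0 ^+ 2.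
Definition HCq3 (p : 'I_5 -> C) : {mpoly C[5]} :=
  ((v22 p)%:MP * Z0 - (v12 p)%:MP * Z1) * XX + (v21 p)%:MP * Z0 * Z3
  - (v11 p)%:MP * Z1 * Z2 - (dpar p)%:MP * Z0 * Z1.

Definition HCeqs (p : 'I_5 -> C) (k : 'I_3) : {mpoly C[5]} :=
  nth 0 [:: HCq1; HCq2; HCq3 p] k.

Definition HCjac (p : 'I_5 -> C) (z : 'I_5 -> C) : 'M[C]_(3, 5) :=
  \matrix_(k < 3, j < 5) ((HCeqs p k)^`M(j)).@[z].

Definition on_HC (p : 'I_5 -> C) (z : 'I_5 -> C) : Prop :=
  nonzero5 z /\ forall k : 'I_3, (HCeqs p k).@[z] = 0.

Definition HC_singular (p : 'I_5 -> C) (z : 'I_5 -> C) : Prop :=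
  on_HC p z /\ (\rank (HCjac p z) < 3)%N.

Definition proj_eq (z w : 'I_5 -> C) : Prop :=
  exists c : C, c != 0 /\ forall i, z i = c * w i.

Definition vec5 (a b c d e : C) : 'I_5 -> C :=
  fun i => nth 0 [:: a; b; c; d; e] i.

Definition HCp (k : 'I_4) : 'I_5 -> C :=
  nth (vec5 0 0 0 0 0)
    [:: vec5 (-1) 0 1 0 0; vec5 0 (-1) 0 1 0; vec5 0 1 0 1 0; vec5 1 0 1 0 0] k.

Definition HCq (k : 'I_4) : 'I_5 -> C :=
  nth (vec5 0 0 0 0 0)
    [:: vec5 0 0 1 1 'i; vec5 0 0 1 1 (- 'i);
        vec5 0 0 1 (-1) 'i; vec5 0 0 1 (-1) (- 'i)] k.

Definition nondeg_v (p : 'I_5 -> C) : Prop :=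
  v11 p ^+ 2 + v12 p ^+ 2 != 0 \/ v21 p ^+ 2 + v22 p ^+ 2 != 0.

Definition homog_family (S : seq {mpoly C[5]}) : Prop :=
  forall P, P \in S -> exists n : nat, P \is [in C[5], n.-homog].

Definition outside_zeros (S : seq {mpoly C[5]}) (p : 'I_5 -> C) : Prop :=
  exists2 P, P \in S & P.@[p] != 0.

End HC.

(* Main.v *)
Require Import Defs.
From HB Require Import structures.
From mathcomp Require Import all_boot all_order all_algebra.
From mathcomp Require Import mpoly.
From mathcomp Require Import ring.
Import Order.TTheory GRing.Theory Num.Theory.
Local Open Scope ring_scope.
Set Implicit Arguments. Unset Strict Implicit.

Section Gen.
Variable R : comRingType.

Definition cA2 (v11 v12 v21 v22 d : R) : R := v21 - v11 - d.
Definition cA1 (v11 v12 v21 v22 d : R) : R := - (2%:R * v12).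
Definition cA0 (v11 v12 v21 v22 d : R) : R := v21 + v11 - d.
Definition cB2 (v11 v12 v21 v22 d : R) : R := 2%:R * v22.
Definition cC2 (v11 v12 v21 v22 d : R) : R := - v21 - v11 - d.
Definition cC0 (v11 v12 v21 v22 d : R) : R := - v21 + v11 - d.
Definition k4 (v11 v12 v21 v22 d : R) : R :=
  let A2 := cA2 v11 v12 v21 v22 d in let B2 := cB2 v11 v12 v21 v22 d in
  let C2 := cC2 v11 v12 v21 v22 d in B2 * B2 - 4%:R * (A2 * C2).
Definition k3 (v11 v12 v21 v22 d : R) : R :=
  let A2 := cA2 v11 v12 v21 v22 d in let A1 := cA1 v11 v12 v21 v22 d in
  let C2 := cC2 v11 v12 v21 v22 d in - (4%:R * (A2 * A1 + A1 * C2)).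
Definition k2 (v11 v12 v21 v22 d : R) : R :=
  let A2 := cA2 v11 v12 v21 v22 d in let A1 := cA1 v11 v12 v21 v22 d in
  let A0 := cA0 v11 v12 v21 v22 d in let B2 := cB2 v11 v12 v21 v22 d in
  let C2 := cC2 v11 v12 v21 v22 d in let C0 := cC0 v11 v12 v21 v22 d in
  2%:R * (B2 * B2) - 4%:R * (A2 * C0 + A1 * A1 + A0 * C2).
Definition k1 (v11 v12 v21 v22 d : R) : R :=
  let A1 := cA1 v11 v12 v21 v22 d in
  let A0 := cA0 v11 v12 v21 v22 d in let C0 := cC0 v11 v12 v21 v22 d in
  - (4%:R * (A1 * C0 + A0 * A1)).
Definition k0 (v11 v12 v21 v22 d : R) : R :=
  let A0 := cA0 v11 v12 v21 v22 d in let B2 := cB2 v11 v12 v21 v22 d in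
  let C0 := cC0 v11 v12 v21 v22 d in B2 * B2 - 4%:R * (A0 * C0).
Definition t6 (k : nat) (x1 x2 x3 x4 x5 x6 : R) : R := k%:R * (x1 * x2 * x3 * x4 * x5 * x6).
Definition Dq (e d c b a : R) : R :=
  t6 256 a a a e e e - t6 192 a a b d e e - t6 128 a a c c e e + t6 144 a a c d d e
  - t6 27 a a d d d d + t6 144 a b b c e e - t6 6 a b b d d e - t6 80 a b c c d e
  + t6 18 a b c d d d + t6 16 a c c c c e - t6 4 a c c c d d - t6 27 b b b b e e
  + t6 18 b b b c d e - t6 4 b b b d d d - t6 4 b b c c c e + t6 1 b b c c d d.
Definition Dv (v11 v12 v21 v22 d : R) : R :=
  Dq (k0 v11 v12 v21 v22 d) (k1 v11 v12 v21 v22 d) (k2 v11 v12 v21 v22 d)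
     (k3 v11 v12 v21 v22 d) (k4 v11 v12 v21 v22 d).
Definition Pfull (v11 v12 v21 v22 d : R) : R :=
  Dv v11 v12 v21 v22 d *
  (v12 * v22 * (v21 - d - v11) * (v21 - d + v11) * (- v21 - d - v11) * (- v21 - d + v11))
  * (v11 * v11 + v12 * v12).
End Gen.



Section Morph.
Variables (R S : comRingType) (f : R -> S).
Hypothesis fD : forall x y, f (x + y) = f x + f y.
Hypothesis fN : forall x, f (- x) = - f x.
Hypothesis fM : forall x y, f (x * y) = f x * f y.
Hypothesis fn : forall n, f n%:R = n%:R.

Lemma Dq_morph e d c b a :
  f (Dq e d c b a) = Dq (f e) (f d) (f c) (f b) (f a).
Proof.
have t6m : forall k x1 x2 x3 x4 x5 x6, f (t6 k x1 x2 x3 x4 x5 x6) = t6 k (f x1) (f x2) (f x3) (f x4) (f x5) (f x6).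
  by move=> k x1 x2 x3 x4 x5 x6; rewrite /t6 fM fn !fM.
by rewrite /Dq !fD !fN !t6m.
Qed.

Lemma c_morph a b c d e :
  [/\ f (cA2 a b c d e) = cA2 (f a) (f b) (f c) (f d) (f e),
      f (cA1 a b c d e) = cA1 (f a) (f b) (f c) (f d) (f e),
      f (cA0 a b c d e) = cA0 (f a) (f b) (f c) (f d) (f e),
      f (cB2 a b c d e) = cB2 (f a) (f b) (f c) (f d) (f e) &
      f (cC2 a b c d e) = cC2 (f a) (f b) (f c) (f d) (f e) /\
      f (cC0 a b c d e) = cC0 (f a) (f b) (f c) (f d) (f e)].
Proof.
by rewrite /cA2 /cA1 /cA0 /cB2 /cC2 /cC0; do ?split; rewrite ?fD ?fN ?fM ?fn ?fD ?fN.
Qed.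

Lemma k_morph a b c d e :
  [/\ f (k0 a b c d e) = k0 (f a) (f b) (f c) (f d) (f e),
      f (k1 a b c d e) = k1 (f a) (f b) (f c) (f d) (f e),
      f (k2 a b c d e) = k2 (f a) (f b) (f c) (f d) (f e),
      f (k3 a b c d e) = k3 (f a) (f b) (f c) (f d) (f e) &
      f (k4 a b c d e) = k4 (f a) (f b) (f c) (f d) (f e)].
Proof.
have [h1 h2 h3 h4 [h5 h6]] := c_morph a b c d e.
by rewrite /k0 /k1 /k2 /k3 /k4 /=; split; do ![rewrite h1|rewrite h2|rewrite h3|rewrite h4|rewrite h5|rewrite h6|rewrite fn|rewrite fN|rewrite fM|rewrite fD].
Qed.

Lemma Pfull_morph a b c d e :
  f (Pfull a b c d e) = Pfull (f a) (f b) (f c) (f d) (f e).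
Proof.
rewrite /Pfull /Dv !fM Dq_morph.
have [-> -> -> -> ->] := k_morph a b c d e.
by rewrite ?fD ?fN ?fM ?fD ?fN.
Qed.
End Morph.

Section Main.
Variable C : numClosedFieldType.

Lemma disc_double (c0 c1 c2 c3 c4 r : C) :
  c4 * r ^+ 4 + c3 * r ^+ 3 + c2 * r ^+ 2 + c1 * r + c0 = 0 ->
  4%:R * c4 * r ^+ 3 + 3%:R * c3 * r ^+ 2 + 2%:R * c2 * r + c1 = 0 ->
  Dq c0 c1 c2 c3 c4 = 0.
Proof.
move=> h0 h1.
have e1 : c1 = - (4%:R * c4 * r ^+ 3 + 3%:R * c3 * r ^+ 2 + 2%:R * c2 * r).
  by rewrite -[LHS]subr0 -h1; ring.
rewrite e1 in h0.
have e0 : c0 = 3%:R * c4 * r ^+ 4 + 2%:R * c3 * r ^+ 3 + c2 * r ^+ 2.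
  by rewrite -[LHS]subr0 -h0; ring.
rewrite e1 e0 /Dq /t6; ring.
Qed.

Lemma dX (i j : 'I_5) : ('X_j : {mpoly C[5]})^`M(i) = (j == i)%:R.
Proof.
rewrite mderivX mnm1E; case: eqP => [->|_].
  have -> : (U_(i) - U_(i) = 0)%MM by apply/mnmP => k; rewrite !mnmE subnn.
  by rewrite mpolyX0 scale1r.
by rewrite scale0r.
Qed.

Definition jx (p z : 'I_5 -> C) (k j : nat) : C :=
  let z0 := z i0 in let z1 := z i1 in let z2 := z i2 in let z3 := z i3 in let x := z i4 in
  nth 0 (nth [::]
   [:: [:: -(2%:R*z0); 2%:R*z1; 2%:R*z2; -(2%:R*z3); 0];
       [:: -(2%:R*z0); 0; 2%:R*z2; 0; 2%:R*x];
       [:: v22 p * x + v21 p * z3 - dpar p * z1; - (v12 p * x) - v11 p * z2 - dpar p * z0;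
           - (v11 p * z1); v21 p * z0; v22 p * z0 - v12 p * z1]] k) j.

Lemma jacE p z (k : 'I_3) (j : 'I_5) : HCjac p z k j = jx p z k j.
Proof.
rewrite mxE /HCeqs /HCq1 /HCq2 /HCq3 /Z0 /Z1 /Z2 /Z3 /XX.
case: k => [[|[|[|//]]] hk] /=;
rewrite ?expr2 ?(mderivD, mderivB, mderivN, mderivM, mderivC, dX) ?(mevalD, mevalB, mevalN, mevalM, mevalC, mevalXU, meval0, meval1, rmorph_nat);
case: j => [[|[|[|[|[|//]]]]] hj] /=; rewrite /jx /=; ring.
Qed.

Lemma rank_lt3 (M : 'M[C]_(3,5)) :
  (\rank M < 3)%N <-> exists u : 'rV_3, u != 0 /\ u *m M = 0.
Proof.
split.
- move=> hr.
  have nf : ~~ row_free M by rewrite /row_free; apply: contraTN hr => /eqP ->.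
  have : kermx M != 0 by rewrite kermx_eq0.
  move=> nK.
  have [i [j hij]] : exists i j, kermx M i j != 0.
    case/boolP: [exists i, exists j, kermx M i j != 0] => [/existsP [i /existsP [j h]]|/existsPn h].
      by exists i, j.
    exfalso; move/eqP: nK; apply; apply/matrixP => i j.
    have := h i; move/existsPn => /(_ j); rewrite negbK => /eqP ->.
    by rewrite mxE.
  exists (row i (kermx M)); split.
    apply/eqP => hr0; move: hij.
    have e : row i (kermx M) 0 j = kermx M i j by rewrite mxE.
    by rewrite -e hr0 mxE eqxx.
  by rewrite -row_mul mulmx_ker row0.
- case=> u [nu hu]; rewrite ltn_neqAle rank_leq_row andbT.
  apply/negP => /eqP h.
  have rf : row_free M by rewrite /row_free h.
  by move: (mulmx_free_eq0 u rf); rewrite hu eqxx (negbTE nu).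
Qed.

Definition ueq (p z : 'I_5 -> C) (u1 u2 u3 : C) :=
  forall j : 'I_5, u1 * jx p z 0 j + u2 * jx p z 1 j + u3 * jx p z 2 j = 0.

Lemma rankP p z : (\rank (HCjac p z) < 3)%N <->
  exists u1 u2 u3, ~~ [&& u1 == 0, u2 == 0 & u3 == 0] /\ ueq p z u1 u2 u3.
Proof.
rewrite rank_lt3; split.
- case=> u [nu hu]; exists (u 0 0), (u 0 1), (u 0 2); split.
    apply: contra nu => /and3P [/eqP h0 /eqP h1 /eqP h2].
    apply/eqP/rowP => k; rewrite !mxE.
    case: k => [[|[|[|//]]] hk].
    - by have -> : Ordinal hk = 0 by apply/val_inj.
    - by have -> : Ordinal hk = 1 by apply/val_inj.
    - by have -> : Ordinal hk = 2 by apply/val_inj.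
  move=> j; move/matrixP: hu => /(_ 0 j); rewrite !mxE.
  rewrite !big_ord_recl big_ord0 addr0 !jacE addrA.
  have e1 : lift ord0 ord0 = 1 :> 'I_3 by apply/val_inj.
  have e2 : lift ord0 (lift ord0 ord0) = 2 :> 'I_3 by apply/val_inj.
  by rewrite e1 e2.
- case=> u1 [u2 [u3 [nu hu]]].
  exists (\row_(k < 3) nth 0 [:: u1; u2; u3] k); split.
    apply: contra nu => /eqP/rowP h.
    by move: (h 0) (h 1) (h 2); rewrite !mxE /= => -> -> ->; rewrite eqxx.
  apply/rowP => j; rewrite !mxE !big_ord_recl big_ord0 addr0 !jacE !mxE /= addrA.
  exact: hu.
Qed.

Definition o30 : 'I_3 := @Ordinal 3 0 isT.
Definition o31 : 'I_3 := @Ordinal 3 1 isT.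
Definition o32 : 'I_3 := @Ordinal 3 2 isT.
Definition o40 : 'I_4 := @Ordinal 4 0 isT.
Definition o41 : 'I_4 := @Ordinal 4 1 isT.
Definition o42 : 'I_4 := @Ordinal 4 2 isT.
Definition o43 : 'I_4 := @Ordinal 4 3 isT.

Lemma ord5P (P : 'I_5 -> Prop) : P i0 -> P i1 -> P i2 -> P i3 -> P i4 -> forall i, P i.
Proof.
move=> h0 h1 h2 h3 h4 [[|[|[|[|[|//]]]]] hi].
- by have -> : Ordinal hi = i0 by apply/val_inj.
- by have -> : Ordinal hi = i1 by apply/val_inj.
- by have -> : Ordinal hi = i2 by apply/val_inj.
- by have -> : Ordinal hi = i3 by apply/val_inj.
- by have -> : Ordinal hi = i4 by apply/val_inj.
Qed.

Lemma ord4P (P : 'I_4 -> Prop) : P o40 -> P o41 -> P o42 -> P o43 -> forall i, P i.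
Proof.
move=> h0 h1 h2 h3 [[|[|[|[|//]]]] hi].
- by have -> : Ordinal hi = o40 by apply/val_inj.
- by have -> : Ordinal hi = o41 by apply/val_inj.
- by have -> : Ordinal hi = o42 by apply/val_inj.
- by have -> : Ordinal hi = o43 by apply/val_inj.
Qed.

Lemma ord3P (P : 'I_3 -> Prop) : P o30 -> P o31 -> P o32 -> forall i, P i.
Proof.
move=> h0 h1 h2 [[|[|[|//]]] hi].
- by have -> : Ordinal hi = o30 by apply/val_inj.
- by have -> : Ordinal hi = o31 by apply/val_inj.
- by have -> : Ordinal hi = o32 by apply/val_inj.
Qed.

Lemma evq (p z : 'I_5 -> C) :
  [/\ (HCeqs p o30).@[z] = z i2 ^+ 2 - z i0 ^+ 2 - (z i3 ^+ 2 - z i1 ^+ 2),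
      (HCeqs p o31).@[z] = z i4 ^+ 2 + z i2 ^+ 2 - z i0 ^+ 2 &
      (HCeqs p o32).@[z] = (v22 p * z i0 - v12 p * z i1) * z i4 + v21 p * z i0 * z i3
         - v11 p * z i1 * z i2 - dpar p * z i0 * z i1].
Proof.
rewrite /HCeqs /= /HCq1 /HCq2 /HCq3 /Z0 /Z1 /Z2 /Z3 /XX.
by split; rewrite ?(mevalD, mevalB, mevalN, mevalM, mevalC, mevalXU, rmorphXn).
Qed.

Lemma nz5 (z : 'I_5 -> C) : nonzero5 z -> ~ (z i0 = 0 /\ z i1 = 0 /\ z i2 = 0 /\ z i3 = 0 /\ z i4 = 0).
Proof.
case=> i; move: i; apply: ord5P => h [e0 [e1 [e2 [e3 e4]]]].
- by rewrite e0 eqxx in h.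
- by rewrite e1 eqxx in h.
- by rewrite e2 eqxx in h.
- by rewrite e3 eqxx in h.
- by rewrite e4 eqxx in h.
Qed.

Section Core.
Variables a11 a12 a21 a22 dd : C.

Definition E0 (u1 u2 u3 z0 z1 z2 z3 x : C) :=
  u1 * - (2%:R * z0) + u2 * - (2%:R * z0) + u3 * (a22 * x + a21 * z3 - dd * z1).
Definition E1 (u1 u2 u3 z0 z1 z2 z3 x : C) :=
  u1 * (2%:R * z1) + u2 * 0 + u3 * (- (a12 * x) - a11 * z2 - dd * z0).
Definition E2 (u1 u2 u3 z0 z1 z2 z3 x : C) :=
  u1 * (2%:R * z2) + u2 * (2%:R * z2) + u3 * - (a11 * z1).
Definition E3 (u1 u2 u3 z0 z1 z2 z3 x : C) :=
  u1 * - (2%:R * z3) + u2 * 0 + u3 * (a21 * z0).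
Definition E4 (u1 u2 u3 z0 z1 z2 z3 x : C) :=
  u1 * 0 + u2 * (2%:R * x) + u3 * (a22 * z0 - a12 * z1).

Let A2 := cA2 a11 a12 a21 a22 dd. Let A1 := cA1 a11 a12 a21 a22 dd.
Let A0 := cA0 a11 a12 a21 a22 dd. Let B2 := cB2 a11 a12 a21 a22 dd.
Let C2 := cC2 a11 a12 a21 a22 dd. Let C0 := cC0 a11 a12 a21 a22 dd.
Definition FF (m n : C) := (A2 * m^+2 + A1 * m + A0) * n^+2 + (B2 * m^+2 + B2) * n
   + (C2 * m^+2 + A1 * m + C0).
Definition Fm (m n : C) := (2%:R * A2 * m + A1) * n^+2 + (2%:R * B2 * m) * n
   + (2%:R * C2 * m + A1).
Definition Fn (m n : C) := 2%:R * (A2 * m^+2 + A1 * m + A0) * n + (B2 * m^+2 + B2).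

Lemma two_neq0 : (2%:R : C) != 0. Proof. by rewrite pnatr_eq0. Qed.

Lemma core_x (u1 u2 u3 z0 z1 z2 z3 x : C) :
  z2 ^+ 2 - z0 ^+ 2 - (z3 ^+ 2 - z1 ^+ 2) = 0 -> x ^+ 2 + z2 ^+ 2 - z0 ^+ 2 = 0 ->
  E0 u1 u2 u3 z0 z1 z2 z3 x = 0 -> E1 u1 u2 u3 z0 z1 z2 z3 x = 0 ->
  E2 u1 u2 u3 z0 z1 z2 z3 x = 0 -> E3 u1 u2 u3 z0 z1 z2 z3 x = 0 ->
  E4 u1 u2 u3 z0 z1 z2 z3 x = 0 -> u3 != 0 -> x != 0 ->
  Dv a11 a12 a21 a22 dd = 0.
Proof.
move=> q1 q2 h0 h1 h2 h3 h4 nu3 nx.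
have S2 : x ^+ 2 + z3 ^+ 2 - z1 ^+ 2 = 0.
  have -> : x ^+ 2 + z3 ^+ 2 - z1 ^+ 2 = (x ^+ 2 + z2 ^+ 2 - z0 ^+ 2) - (z2 ^+ 2 - z0 ^+ 2 - (z3 ^+ 2 - z1 ^+ 2)) by ring.
  by rewrite q1 q2 subrr.
have [m hm] : exists m, z0 + z2 - m * x = 0.
  by exists ((z0 + z2) / x); rewrite divfK // subrr.
have [n hn] : exists n, z1 + z3 - n * x = 0.
  by exists ((z1 + z3) / x); rewrite divfK // subrr.
have hm2 : (z0 - z2) * m - x = 0.
  have : x * ((z0 - z2) * m - x) = - (z0 + z2 - m * x) * (z0 - z2) - (x ^+ 2 + z2 ^+ 2 - z0 ^+ 2) by ring.
  by rewrite hm q2 oppr0 mul0r addr0 => /eqP; rewrite mulf_eq0 (negbTE nx) => /eqP.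
have hn2 : (z1 - z3) * n - x = 0.
  have : x * ((z1 - z3) * n - x) = - (z1 + z3 - n * x) * (z1 - z3) - (x ^+ 2 + z3 ^+ 2 - z1 ^+ 2) by ring.
  by rewrite hn S2 oppr0 mul0r addr0 => /eqP; rewrite mulf_eq0 (negbTE nx) => /eqP.
have nm : m != 0.
  apply: contra nx => /eqP m0; apply/eqP.
  have -> : x = (z0 - z2) * m - ((z0 - z2) * m - x) by ring.
  by rewrite hm2 m0 mulr0 subr0.
have nn : n != 0.
  apply: contra nx => /eqP n0; apply/eqP.
  have -> : x = (z1 - z3) * n - ((z1 - z3) * n - x) by ring.
  by rewrite hn2 n0 mulr0 subr0.
have h2m : 2%:R * m != 0 by rewrite mulf_neq0 // two_neq0.
have h2n : 2%:R * n != 0 by rewrite mulf_neq0 // two_neq0.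
have e0 : z0 = x * (m ^+ 2 + 1) / (2%:R * m).
  apply: (mulfI h2m); rewrite mulrCA divff // mulr1.
  apply/eqP; rewrite -subr_eq0; apply/eqP.
  have -> : 2%:R * m * z0 - x * (m ^+ 2 + 1) = m * (z0 + z2 - m * x) + ((z0 - z2) * m - x) by ring.
  by rewrite hm hm2; ring.
have e2 : z2 = x * (m ^+ 2 - 1) / (2%:R * m).
  apply: (mulfI h2m); rewrite mulrCA divff // mulr1.
  apply/eqP; rewrite -subr_eq0; apply/eqP.
  have -> : 2%:R * m * z2 - x * (m ^+ 2 - 1) = m * (z0 + z2 - m * x) - ((z0 - z2) * m - x) by ring.
  by rewrite hm hm2; ring.
have e1 : z1 = x * (n ^+ 2 + 1) / (2%:R * n).
  apply: (mulfI h2n); rewrite mulrCA divff // mulr1.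
  apply/eqP; rewrite -subr_eq0; apply/eqP.
  have -> : 2%:R * n * z1 - x * (n ^+ 2 + 1) = n * (z1 + z3 - n * x) + ((z1 - z3) * n - x) by ring.
  by rewrite hn hn2; ring.
have e3 : z3 = x * (n ^+ 2 - 1) / (2%:R * n).
  apply: (mulfI h2n); rewrite mulrCA divff // mulr1.
  apply/eqP; rewrite -subr_eq0; apply/eqP.
  have -> : 2%:R * n * z3 - x * (n ^+ 2 - 1) = n * (z1 + z3 - n * x) - ((z1 - z3) * n - x) by ring.
  by rewrite hn hn2; ring.
pose Es := (E0 u1 u2 u3 z0 z1 z2 z3 x, E1 u1 u2 u3 z0 z1 z2 z3 x, E2 u1 u2 u3 z0 z1 z2 z3 x,
  E3 u1 u2 u3 z0 z1 z2 z3 x, E4 u1 u2 u3 z0 z1 z2 z3 x).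
have K1 : x * u3 * FF m n = Es.1.1.1.1 * (n * (m ^+ 2 + 1)) + Es.1.1.1.2 * (m * (n ^+ 2 + 1))
    + Es.1.1.2 * (n * (m ^+ 2 - 1)) + Es.1.2 * (m * (n ^+ 2 - 1)) + Es.2 * (2%:R * m * n).
  rewrite /Es /= /E0 /E1 /E2 /E3 /E4 /FF /A2 /A1 /A0 /B2 /C2 /C0 /cA2 /cA1 /cA0 /cB2 /cC2 /cC0 e0 e1 e2 e3.
  by field; rewrite nn nm.
have K2 : x * u3 * (n * FF m n + m * n * Fm m n) = 2%:R * m * n * (Es.1.1.1.1 * (2%:R * m * n) + Es.1.1.1.2 * (n ^+ 2 + 1)
    + Es.1.1.2 * (2%:R * m * n) + Es.1.2 * (n ^+ 2 - 1) + Es.2 * (2%:R * n)).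
  rewrite /Es /= /E0 /E1 /E2 /E3 /E4 /FF /Fm /A2 /A1 /A0 /B2 /C2 /C0 /cA2 /cA1 /cA0 /cB2 /cC2 /cC0 e0 e1 e2 e3.
  by field; rewrite nn nm.
have K3 : x * u3 * (m * FF m n + m * n * Fn m n) = 2%:R * m * n * (Es.1.1.1.1 * (m ^+ 2 + 1) + Es.1.1.1.2 * (2%:R * m * n)
    + Es.1.1.2 * (m ^+ 2 - 1) + Es.1.2 * (2%:R * m * n) + Es.2 * (2%:R * m)).
  rewrite /Es /= /E0 /E1 /E2 /E3 /E4 /FF /Fn /A2 /A1 /A0 /B2 /C2 /C0 /cA2 /cA1 /cA0 /cB2 /cC2 /cC0 e0 e1 e2 e3.
  by field; rewrite nn nm.
rewrite /Es /= h0 h1 h2 h3 h4 in K1 K2 K3.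
have F0 : FF m n = 0.
  by move/eqP: K1; rewrite !mul0r !addr0 !mulf_eq0 (negbTE nx) (negbTE nu3) => /eqP.
rewrite F0 in K2 K3.
have Fm0 : Fm m n = 0.
  by move/eqP: K2; rewrite !(mul0r, mulr0, addr0, add0r) !mulf_eq0 (negbTE nx) (negbTE nu3) (negbTE nm) (negbTE nn) => /eqP.
have Fn0 : Fn m n = 0.
  by move/eqP: K3; rewrite !(mul0r, mulr0, addr0, add0r) !mulf_eq0 (negbTE nx) (negbTE nu3) (negbTE nm) (negbTE nn) => /eqP.
rewrite /Dv; apply: (disc_double (r := m)).
  have -> : k4 a11 a12 a21 a22 dd * m ^+ 4 + k3 a11 a12 a21 a22 dd * m ^+ 3 + k2 a11 a12 a21 a22 dd * m ^+ 2 +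
     k1 a11 a12 a21 a22 dd * m + k0 a11 a12 a21 a22 dd
    = Fn m n ^+ 2 - 4%:R * (A2 * m ^+ 2 + A1 * m + A0) * FF m n.
    by rewrite /k4 /k3 /k2 /k1 /k0 /FF /Fn /A2 /A1 /A0 /B2 /C2 /C0; ring.
  by rewrite Fn0 F0; ring.
have -> : 4%:R * k4 a11 a12 a21 a22 dd * m ^+ 3 + 3%:R * k3 a11 a12 a21 a22 dd * m ^+ 2 + 2%:R * k2 a11 a12 a21 a22 dd * m +
     k1 a11 a12 a21 a22 dd
    = 2%:R * Fn m n * (2%:R * (2%:R * A2 * m + A1) * n + 2%:R * B2 * m)
      - 4%:R * (2%:R * A2 * m + A1) * FF m n - 4%:R * (A2 * m ^+ 2 + A1 * m + A0) * Fm m n.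
  by rewrite /k4 /k3 /k2 /k1 /k0 /FF /Fn /Fm /A2 /A1 /A0 /B2 /C2 /C0; ring.
by rewrite Fn0 F0 Fm0; ring.
Qed.
Lemma sq_eq (a b : C) : a ^+ 2 = b ^+ 2 -> a = b \/ a = - b.
Proof.
move=> h; have : (a - b) * (a + b) = 0 by rewrite -[RHS](subrr (b ^+ 2)) -{1}h; ring.
move/eqP; rewrite mulf_eq0 => /orP [/eqP e|/eqP e]; [left|right].
  by rewrite -[a](subrK b) e add0r.
by rewrite -[a](addrK b) e sub0r.
Qed.

Lemma sq0 (a : C) : a ^+ 2 = 0 -> a = 0.
Proof. by move/eqP; rewrite expf_eq0 => /andP [_ /eqP]. Qed.

Lemma core_x0 (u1 u2 u3 z0 z1 z2 z3 : C) :
  z2 ^+ 2 - z0 ^+ 2 - (z3 ^+ 2 - z1 ^+ 2) = 0 -> 0 ^+ 2 + z2 ^+ 2 - z0 ^+ 2 = 0 ->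
  E0 u1 u2 u3 z0 z1 z2 z3 0 = 0 ->
  E2 u1 u2 u3 z0 z1 z2 z3 0 = 0 ->
  E4 u1 u2 u3 z0 z1 z2 z3 0 = 0 -> u3 != 0 ->
  ~ (z0 = 0 /\ z1 = 0 /\ z2 = 0 /\ z3 = 0) ->
  a12 * a22 * (a21 - dd - a11) * (a21 - dd + a11) * (- a21 - dd - a11) * (- a21 - dd + a11) = 0.
Proof.
move=> q1 q2 h0 h2 h4 nu3 nz.
have e20 : z2 ^+ 2 = z0 ^+ 2.
  apply: subr0_eq; rewrite -[RHS]q2; ring.
have e31 : z3 ^+ 2 = z1 ^+ 2.
  apply: subr0_eq.
  have -> : z3 ^+ 2 - z1 ^+ 2 = (z2 ^+ 2 - z0 ^+ 2) - (z2 ^+ 2 - z0 ^+ 2 - (z3 ^+ 2 - z1 ^+ 2)) by ring.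
  by rewrite q1 e20 !subrr.
have e4 : u3 * (a22 * z0 - a12 * z1) = 0 by rewrite -h4 /E4; ring.
move/eqP: e4; rewrite mulf_eq0 (negbTE nu3) /= subr_eq0 => /eqP e4.
have [z00|nz0] := eqVneq z0 0.
  have z20 : z2 = 0 by apply: sq0; rewrite e20 z00; ring.
  have [v120|nv12] := eqVneq a12 0; first by rewrite v120; ring.
  have z10 : z1 = 0.
    by move/eqP: e4; rewrite z00 mulr0 eq_sym mulf_eq0 (negbTE nv12) => /eqP.
  have z30 : z3 = 0 by apply: sq0; rewrite e31 z10; ring.
  by case: nz.
have [v220|nv22] := eqVneq a22 0; first by rewrite v220; ring.
have nz1 : z1 != 0.
  apply: contraNneq (mulf_neq0 nv22 nz0) => z10.
  by rewrite e4 z10 mulr0.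
have fin : forall L : C, u3 * z1 * L = 0 -> L = 0.
  by move=> L /eqP; rewrite !mulf_eq0 (negbTE nu3) (negbTE nz1) /= => /eqP.
case: (sq_eq e20) => ez2; case: (sq_eq e31) => ez3.
- have -> : a21 - dd - a11 = 0; last by ring.
  apply: fin; have -> : u3 * z1 * (a21 - dd - a11) = E0 u1 u2 u3 z0 z1 z2 z3 0 + E2 u1 u2 u3 z0 z1 z2 z3 0 by rewrite /E0 /E2 ez2 ez3; ring.
  by rewrite h0 h2 addr0.
- have -> : - a21 - dd - a11 = 0; last by ring.
  apply: fin; have -> : u3 * z1 * (- a21 - dd - a11) = E0 u1 u2 u3 z0 z1 z2 z3 0 + E2 u1 u2 u3 z0 z1 z2 z3 0 by rewrite /E0 /E2 ez2 ez3; ring.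
  by rewrite h0 h2 addr0.
- have -> : a21 - dd + a11 = 0; last by ring.
  apply: fin; have -> : u3 * z1 * (a21 - dd + a11) = E0 u1 u2 u3 z0 z1 z2 z3 0 - E2 u1 u2 u3 z0 z1 z2 z3 0 by rewrite /E0 /E2 ez2 ez3; ring.
  by rewrite h0 h2 subr0.
- have -> : - a21 - dd + a11 = 0; last by ring.
  apply: fin; have -> : u3 * z1 * (- a21 - dd + a11) = E0 u1 u2 u3 z0 z1 z2 z3 0 - E2 u1 u2 u3 z0 z1 z2 z3 0 by rewrite /E0 /E2 ez2 ez3; ring.
  by rewrite h0 h2 subr0.
Qed.

Lemma mulIz (a b : C) : a != 0 -> a * b = 0 -> b = 0.
Proof. by move=> na /eqP; rewrite mulf_eq0 (negbTE na) => /eqP. Qed.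

Lemma core_u30 (u1 u2 z0 z1 z2 z3 x : C) :
  z2 ^+ 2 - z0 ^+ 2 - (z3 ^+ 2 - z1 ^+ 2) = 0 -> x ^+ 2 + z2 ^+ 2 - z0 ^+ 2 = 0 ->
  E0 u1 u2 0 z0 z1 z2 z3 x = 0 -> E1 u1 u2 0 z0 z1 z2 z3 x = 0 ->
  E2 u1 u2 0 z0 z1 z2 z3 x = 0 -> E3 u1 u2 0 z0 z1 z2 z3 x = 0 ->
  E4 u1 u2 0 z0 z1 z2 z3 x = 0 -> (u1 != 0) || (u2 != 0) ->
  ~ (z0 = 0 /\ z1 = 0 /\ z2 = 0 /\ z3 = 0 /\ x = 0) ->
  exists c, c != 0 /\
   ((z0 = - c /\ z1 = 0 /\ z2 = c /\ z3 = 0 /\ x = 0) \/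
    (z0 = 0 /\ z1 = - c /\ z2 = 0 /\ z3 = c /\ x = 0) \/
    (z0 = 0 /\ z1 = c /\ z2 = 0 /\ z3 = c /\ x = 0) \/
    (z0 = c /\ z1 = 0 /\ z2 = c /\ z3 = 0 /\ x = 0)).
Proof.
move=> q1 q2 h0 h1 h2 h3 h4 nu nz.
have S2 : x ^+ 2 + z3 ^+ 2 - z1 ^+ 2 = 0.
  have -> : x ^+ 2 + z3 ^+ 2 - z1 ^+ 2 = (x ^+ 2 + z2 ^+ 2 - z0 ^+ 2) - (z2 ^+ 2 - z0 ^+ 2 - (z3 ^+ 2 - z1 ^+ 2)) by ring.
  by rewrite q1 q2 subrr.
have n2 : (2%:R : C) != 0 := two_neq0.
have a0 : (2%:R * (u1 + u2)) * z0 = 0 by rewrite -[RHS]oppr0 -h0 /E0; ring.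
have a1 : (2%:R * u1) * z1 = 0 by rewrite -h1 /E1; ring.
have a2 : (2%:R * (u1 + u2)) * z2 = 0 by rewrite -h2 /E2; ring.
have a3 : (2%:R * u1) * z3 = 0 by rewrite -[RHS]oppr0 -h3 /E3; ring.
have a4 : (2%:R * u2) * x = 0 by rewrite -h4 /E4; ring.
have [u10|nu1] := eqVneq u1 0.
  move: nu; rewrite u10 eqxx /= => nu2.
  have x0 : x = 0 by apply: (mulIz _ a4); rewrite mulf_neq0.
  have z00 : z0 = 0 by apply: (mulIz _ a0); rewrite u10 add0r mulf_neq0.
  have z20 : z2 = 0 by apply: (mulIz _ a2); rewrite u10 add0r mulf_neq0.
  have e31 : z3 ^+ 2 = z1 ^+ 2 by apply: subr0_eq; rewrite -[RHS]S2 x0; ring.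
  have nz1 : z1 != 0.
    apply/eqP => z10; apply: nz; do !split => //.
    by apply: sq0; rewrite e31 z10; ring.
  case: (sq_eq e31) => ez3.
    exists z1; split => //; right; right; left; done.
  exists z3; split; first by rewrite ez3 oppr_eq0.
  by right; left; rewrite ez3 opprK.
have z10 : z1 = 0 by apply: (mulIz _ a1); rewrite mulf_neq0.
have z30 : z3 = 0 by apply: (mulIz _ a3); rewrite mulf_neq0.
have x0 : x = 0 by apply: sq0; rewrite -[RHS]S2 z10 z30; ring.
have e20 : z2 ^+ 2 = z0 ^+ 2 by apply: subr0_eq; rewrite -[RHS]q2 x0; ring.
have nz0 : z0 != 0.
  apply/eqP => z00; apply: nz; do !split => //.
  by apply: sq0; rewrite e20 z00; ring.
case: (sq_eq e20) => ez2.
  by exists z0; split => //; right; right; right.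
exists z2; split; first by rewrite ez2 oppr_eq0.
by left; rewrite ez2 opprK.
Qed.

Lemma sing_class (p z : 'I_5 -> C) (u1 u2 u3 : C) :
  p i0 = a11 -> p i1 = a12 -> p i2 = a21 -> p i3 = a22 -> p i4 = dd ->
  on_HC p z -> ueq p z u1 u2 u3 -> ~~ [&& u1 == 0, u2 == 0 & u3 == 0] ->
  Pfull a11 a12 a21 a22 dd = 0 \/ exists k, proj_eq z (HCp C k).
Proof.
move=> e11 e12 e21 e22 ed [nzz hq] hu nu.
have [q1e q2e _] := evq p z.
have q1 := hq o30; rewrite q1e in q1.
have q2 := hq o31; rewrite q2e in q2.
have h0 : E0 u1 u2 u3 (z i0) (z i1) (z i2) (z i3) (z i4) = 0.
  by move: (hu i0); rewrite /jx /v11 /v12 /v21 /v22 /dpar /= ?e11 ?e12 ?e21 ?e22 ?ed.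
have h1 : E1 u1 u2 u3 (z i0) (z i1) (z i2) (z i3) (z i4) = 0.
  by move: (hu i1); rewrite /jx /v11 /v12 /v21 /v22 /dpar /= ?e11 ?e12 ?e21 ?e22 ?ed.
have h2 : E2 u1 u2 u3 (z i0) (z i1) (z i2) (z i3) (z i4) = 0.
  by move: (hu i2); rewrite /jx /v11 /v12 /v21 /v22 /dpar /= ?e11 ?e12 ?e21 ?e22 ?ed.
have h3 : E3 u1 u2 u3 (z i0) (z i1) (z i2) (z i3) (z i4) = 0.
  by move: (hu i3); rewrite /jx /v11 /v12 /v21 /v22 /dpar /= ?e11 ?e12 ?e21 ?e22 ?ed.
have h4 : E4 u1 u2 u3 (z i0) (z i1) (z i2) (z i3) (z i4) = 0.
  by move: (hu i4); rewrite /jx /v11 /v12 /v21 /v22 /dpar /= ?e11 ?e12 ?e21 ?e22 ?ed.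
have nz := nz5 nzz.
have [u30|nu3] := eqVneq u3 0.
  rewrite u30 in h0 h1 h2 h3 h4 nu; rewrite eqxx andbT negb_and in nu.
  have [c [nc sh]] := core_u30 q1 q2 h0 h1 h2 h3 h4 nu nz.
  right; case: sh => [[f0 [f1 [f2 [f3 f4]]]]|[[f0 [f1 [f2 [f3 f4]]]]|[[f0 [f1 [f2 [f3 f4]]]]|[f0 [f1 [f2 [f3 f4]]]]]]].
  - exists o40, c; split => //; apply: ord5P; rewrite /HCp /vec5 /= ?f0 ?f1 ?f2 ?f3 ?f4; ring.
  - exists o41, c; split => //; apply: ord5P; rewrite /HCp /vec5 /= ?f0 ?f1 ?f2 ?f3 ?f4; ring.
  - exists o42, c; split => //; apply: ord5P; rewrite /HCp /vec5 /= ?f0 ?f1 ?f2 ?f3 ?f4; ring.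
  - exists o43, c; split => //; apply: ord5P; rewrite /HCp /vec5 /= ?f0 ?f1 ?f2 ?f3 ?f4; ring.
left.
have [x0|nx] := eqVneq (z i4) 0.
  rewrite x0 in q2 h0 h2 h4.
  have nz' : ~ (z i0 = 0 /\ z i1 = 0 /\ z i2 = 0 /\ z i3 = 0).
    by move=> [f0 [f1 [f2 f3]]]; apply: nz.
  by rewrite /Pfull (core_x0 q1 q2 h0 h2 h4 nu3 nz') mulr0 mul0r.
by rewrite /Pfull (core_x q1 q2 h0 h1 h2 h3 h4 nu3 nx) !mul0r.
Qed.

End Core.

Section Hom.
Implicit Types p q : {mpoly C[5]}.

Lemma hX (i : 'I_5) : ('X_i : {mpoly C[5]}) \is 1.-homog.
Proof. by rewrite dhomogX; apply/eqP; apply: mdeg1. Qed.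

Lemma hD d p q : p \is d.-homog -> q \is d.-homog -> p + q \is d.-homog.
Proof. by move=> hp hq; apply: rpredD. Qed.
Lemma hN d p : p \is d.-homog -> - p \is d.-homog.
Proof. by rewrite dhomogN. Qed.
Lemma hB d p q : p \is d.-homog -> q \is d.-homog -> p - q \is d.-homog.
Proof. by move=> hp hq; apply: hD => //; apply: hN. Qed.
Lemma hNat d k p : p \is d.-homog -> k%:R * p \is d.-homog.
Proof. by move=> hp; rewrite mulr_natl; apply: rpredMn. Qed.
Lemma hM d1 d2 d p q : (d1 + d2)%N = d -> p \is d1.-homog -> q \is d2.-homog -> p * q \is d.-homog.
Proof. by move=> <-; apply: dhomogM. Qed.

Lemma ht6 k (x1 x2 x3 x4 x5 x6 : {mpoly C[5]}) :
  x1 \is 2.-homog -> x2 \is 2.-homog -> x3 \is 2.-homog -> x4 \is 2.-homog ->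
  x5 \is 2.-homog -> x6 \is 2.-homog -> t6 k x1 x2 x3 x4 x5 x6 \is 12.-homog.
Proof.
move=> h1 h2 h3 h4 h5 h6; apply: hNat.
apply: (@hM 10 2) => //; apply: (@hM 8 2) => //.
apply: (@hM 6 2) => //; apply: (@hM 4 2) => //.
exact: (@hM 2 2).
Qed.

Lemma hDq (e d c b a : {mpoly C[5]}) :
  e \is 2.-homog -> d \is 2.-homog -> c \is 2.-homog -> b \is 2.-homog -> a \is 2.-homog ->
  Dq e d c b a \is 12.-homog.
Proof.
move=> he hd hc hb ha; rewrite /Dq.
by repeat first [apply: hD | apply: hN | apply: ht6].
Qed.

Ltac hom := repeat first [apply: hD | apply: hN | apply: hNat | apply: (@hM 1 1) => // | apply: hX].

Definition Xv (i : 'I_5) : {mpoly C[5]} := 'X_i.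

Lemma hk : [/\ k0 (Xv i0) (Xv i1) (Xv i2) (Xv i3) (Xv i4) \is 2.-homog,
  k1 (Xv i0) (Xv i1) (Xv i2) (Xv i3) (Xv i4) \is 2.-homog,
  k2 (Xv i0) (Xv i1) (Xv i2) (Xv i3) (Xv i4) \is 2.-homog,
  k3 (Xv i0) (Xv i1) (Xv i2) (Xv i3) (Xv i4) \is 2.-homog &
  k4 (Xv i0) (Xv i1) (Xv i2) (Xv i3) (Xv i4) \is 2.-homog].
Proof.
rewrite /k0 /k1 /k2 /k3 /k4 /cA2 /cA1 /cA0 /cB2 /cC2 /cC0 /Xv.
split; hom.
Qed.

End Hom.

Lemma sing_p (p z : 'I_5 -> C) (k : 'I_4) (c : C) :
  c != 0 -> (forall i, z i = c * HCp C k i) -> HC_singular p z.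
Proof.
move=> nc hz.
have [q1e q2e q3e] := evq p z.
have e0 := hz i0; have e1 := hz i1; have e2 := hz i2; have e3 := hz i3; have e4 := hz i4.
move: k e0 e1 e2 e3 e4 {hz}; apply: ord4P; rewrite /HCp /vec5 /= => e0 e1 e2 e3 e4.
- split.
    split; first by exists i0; rewrite e0 mulrN1 oppr_eq0.
    by apply: ord3P; rewrite ?q1e ?q2e ?q3e ?e0 ?e1 ?e2 ?e3 ?e4; ring.
  apply/rankP; exists 1, (-1), 0; split; first by rewrite oner_eq0.
  by rewrite /ueq; apply: ord5P; rewrite /jx /= ?e0 ?e1 ?e2 ?e3 ?e4; ring.
- split.
    split; first by exists i1; rewrite e1 mulrN1 oppr_eq0.
    by apply: ord3P; rewrite ?q1e ?q2e ?q3e ?e0 ?e1 ?e2 ?e3 ?e4; ring.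
  apply/rankP; exists 0, 1, 0; split; first by rewrite oner_eq0 andbF.
  by rewrite /ueq; apply: ord5P; rewrite /jx /= ?e0 ?e1 ?e2 ?e3 ?e4; ring.
- split.
    split; first by exists i1; rewrite e1 mulr1.
    by apply: ord3P; rewrite ?q1e ?q2e ?q3e ?e0 ?e1 ?e2 ?e3 ?e4; ring.
  apply/rankP; exists 0, 1, 0; split; first by rewrite oner_eq0 andbF.
  by rewrite /ueq; apply: ord5P; rewrite /jx /= ?e0 ?e1 ?e2 ?e3 ?e4; ring.
- split.
    split; first by exists i0; rewrite e0 mulr1.
    by apply: ord3P; rewrite ?q1e ?q2e ?q3e ?e0 ?e1 ?e2 ?e3 ?e4; ring.
  apply/rankP; exists 1, (-1), 0; split; first by rewrite oner_eq0.
  by rewrite /ueq; apply: ord5P; rewrite /jx /= ?e0 ?e1 ?e2 ?e3 ?e4; ring.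
Qed.

Lemma qns (p z : 'I_5 -> C) (s w : C) : s * s = 1 -> w * w = -1 ->
  z i0 = 0 -> z i1 = 0 -> z i2 = 1 -> z i3 = s -> z i4 = w -> nondeg_v p -> ~ HC_singular p z.
Proof.
move=> ss ww e0 e1 e2 e3 e4 nd [_ /rankP [u1 [u2 [u3 [nu hu]]]]].
have ns : s != 0 by apply: contra_eq_neq ss => ->; rewrite mul0r eq_sym oner_eq0.
have nw : w != 0 by apply: contra_eq_neq ww => ->; rewrite mul0r eq_sym oppr_eq0 oner_eq0.
have j0 := hu i0; have j1 := hu i1; have j3 := hu i3; have j4 := hu i4.
rewrite /jx /= e0 e1 e2 e3 e4 in j0 j1 j3 j4.
have u10 : u1 = 0.
  apply: (mulIz (a := 2%:R * s)); first by rewrite mulf_neq0 // two_neq0.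
  by rewrite -[RHS]oppr0 -j3; ring.
have u20 : u2 = 0.
  apply: (mulIz (a := 2%:R * w)); first by rewrite mulf_neq0 // two_neq0.
  by rewrite -j4 u10; ring.
have nu3 : u3 != 0 by move: nu; rewrite u10 u20 eqxx.
have r1 : v22 p * w + v21 p * s = 0.
  by apply: (mulIz nu3); rewrite -j0 u10 u20; ring.
have r2 : v12 p * w + v11 p = 0.
  by apply: (mulIz nu3); rewrite -[RHS]oppr0 -j1 u10 u20; ring.
case: nd => /eqP; apply.
  have -> : v11 p ^+ 2 + v12 p ^+ 2 = (v11 p + v12 p * w) * (v11 p - v12 p * w) + v12 p ^+ 2 * (w * w + 1) by ring.
  have r2' : v11 p + v12 p * w = 0 by rewrite addrC.
  by rewrite r2' ww mul0r addNr mulr0 addr0.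
have -> : v21 p ^+ 2 + v22 p ^+ 2 = v21 p ^+ 2 * (1 - s * s) + (v22 p * w + v21 p * s) * (v21 p * s - v22 p * w)
   + v22 p ^+ 2 * (w * w + 1) by ring.
by rewrite r1 ss ww subrr addNr !mulr0 mul0r !addr0.
Qed.

Definition Pm : {mpoly C[5]} := Pfull (Xv i0) (Xv i1) (Xv i2) (Xv i3) (Xv i4).

Lemma hPm : Pm \is 20.-homog.
Proof.
rewrite /Pm /Pfull.
apply: (@hM 18 2) => //; last by apply: hD; apply: (@hM 1 1) => //; apply: hX.
apply: (@hM 12 6) => //.
  by rewrite /Dv; have [? ? ? ? ?] := hk; apply: hDq.
apply: (@hM 5 1) => //; last by repeat first [apply: hD | apply: hN | apply: hX].
apply: (@hM 4 1) => //; last by repeat first [apply: hD | apply: hN | apply: hX].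
apply: (@hM 3 1) => //; last by repeat first [apply: hD | apply: hN | apply: hX].
apply: (@hM 2 1) => //; last by repeat first [apply: hD | apply: hN | apply: hX].
by apply: (@hM 1 1) => //; apply: hX.
Qed.

Lemma evPm (p : 'I_5 -> C) : Pm.@[p] = Pfull (p i0) (p i1) (p i2) (p i3) (p i4).
Proof.
rewrite /Pm (@Pfull_morph _ _ (meval p)) ?mevalXU //.
- exact: mevalD.
- exact: mevalN.
- exact: mevalM.
- by move=> n; rewrite rmorph_nat.
Qed.

Lemma Pm_p0 : Pm.@[vec5 0 1 0 1 1] != 0.
Proof.
rewrite evPm.
have -> : (vec5 0 1 0 1 1 : 'I_5 -> C) i0 = 0 by [].
have -> : (vec5 0 1 0 1 1 : 'I_5 -> C) i1 = 1 by [].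
have -> : (vec5 0 1 0 1 1 : 'I_5 -> C) i2 = 0 by [].
have -> : (vec5 0 1 0 1 1 : 'I_5 -> C) i3 = 1 by [].
have -> : (vec5 0 1 0 1 1 : 'I_5 -> C) i4 = 1 by [].
have -> : Pfull 0 1 0 1 1 = - (3%:R * 2%:R ^+ 24) :> C.
  rewrite /Pfull /Dv.
  have -> : k0 0 1 0 1 1 = 0 :> C by rewrite /k0 /cA2 /cA1 /cA0 /cB2 /cC2 /cC0 /=; ring.
  have -> : k1 0 1 0 1 1 = - 16%:R :> C by rewrite /k1 /cA2 /cA1 /cA0 /cB2 /cC2 /cC0 /=; ring.
  have -> : k2 0 1 0 1 1 = - 16%:R :> C by rewrite /k2 /cA2 /cA1 /cA0 /cB2 /cC2 /cC0 /=; ring.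
  have -> : k3 0 1 0 1 1 = - 16%:R :> C by rewrite /k3 /cA2 /cA1 /cA0 /cB2 /cC2 /cC0 /=; ring.
  have -> : k4 0 1 0 1 1 = 0 :> C by rewrite /k4 /cA2 /cA1 /cA0 /cB2 /cC2 /cC0 /=; ring.
  rewrite /Dq /t6; ring.
by rewrite oppr_eq0 mulf_neq0 ?expf_neq0 ?pnatr_eq0.
Qed.

Lemma part3 : exists S : seq {mpoly C[5]},
     homog_family S
     /\ (exists p0 : 'I_5 -> C, nonzero5 p0 /\ outside_zeros S p0)
     /\ (forall p : 'I_5 -> C, nonzero5 p -> outside_zeros S p ->
           nondeg_v p
           /\ (forall z : 'I_5 -> C,
                 HC_singular p z <-> exists k : 'I_4, proj_eq z (@HCp C k))).
Proof.
exists [:: Pm]; split.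
  by move=> P; rewrite inE => /eqP ->; exists 20%N; exact: hPm.
split.
  exists (vec5 0 1 0 1 1); split.
    by exists i1; rewrite /vec5 /= oner_neq0.
  by exists Pm; [rewrite inE | exact: Pm_p0].
move=> p _ [P]; rewrite inE => /eqP -> {P}; rewrite evPm => hP.
split.
  left; apply/negP => /eqP h; move: hP.
  by rewrite /Pfull -!expr2 [_ ^+ 2 + _ ^+ 2]h mulr0 eqxx.
move=> z; split.
  case=> hon /rankP [u1 [u2 [u3 [nu hu]]]].
  have := sing_class (erefl (p i0)) (erefl (p i1)) (erefl (p i2)) (erefl (p i3)) (erefl (p i4)) hon hu nu.
  by case=> // h; move: hP; rewrite h eqxx.
by case=> k [c [nc hz]]; apply: (@sing_p p z k c) => // i; rewrite hz.
Qed.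

Lemma part1 : forall (p : 'I_5 -> C), nonzero5 p ->
     forall k : 'I_4, HC_singular p (@HCp C k).
Proof.
move=> p _ k; apply: (@sing_p p _ k 1); first exact: oner_neq0.
by move=> i; rewrite mul1r.
Qed.

Lemma part2 : forall (p : 'I_5 -> C), nonzero5 p -> nondeg_v p ->
     forall k : 'I_4, ~ HC_singular p (@HCq C k).
Proof.
have ii : ('i : C) * 'i = -1 by rewrite -expr2 sqrCi.
move=> p _ nd; apply: ord4P.
- by apply: (qns (s := 1) (w := 'i)) => //; rewrite mulr1.
- by apply: (qns (s := 1) (w := - 'i)) => //; rewrite ?mulr1 ?mulrNN.
- by apply: (qns (s := -1) (w := 'i)) => //; rewrite mulrNN mulr1.
- by apply: (qns (s := -1) (w := - 'i)) => //; rewrite !mulrNN ?mulr1.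
Qed.

End Main.

Theorem lemma5p5 (C : numClosedFieldType) :
  (forall (p : 'I_5 -> C), nonzero5 p ->
     forall k : 'I_4, HC_singular p (@HCp C k))
  /\
  (forall (p : 'I_5 -> C), nonzero5 p -> nondeg_v p ->
     forall k : 'I_4, ~ HC_singular p (@HCq C k))
  /\
  (exists S : seq {mpoly C[5]},
     homog_family S
     /\ (exists p0 : 'I_5 -> C, nonzero5 p0 /\ outside_zeros S p0)
     /\ (forall p : 'I_5 -> C, nonzero5 p -> outside_zeros S p ->
           nondeg_v p
           /\ (forall z : 'I_5 -> C,
                 HC_singular p z <-> exists k : 'I_4, proj_eq z (@HCp C k)))).
Proof.
split; first exact: part1.
split; first exact: part2.
exact: part3.
Qed.
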